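(* Every positively model-complete first-order theory $T$ is geometrically complete. In other words, if $A$ is a model of a positively model-complete theory $T$, $\bar x$ is a finite tuple of variables and $\pi$ is a finite $a$-type of $A[\bar x]$, then $tp_a^A(\pi(A))=\sqrt[T]{\pi}^{+}$.
   Context: A homomorphism preserves atomic sentences with parameters; it is an immersion if it reflects every positive existential (prenex existential, negation-free) sentence with parameters; $T$ is positively model-complete if every homomorphism between models of $T$ is an immersion. A quasi-algebraic formula has the form $\forall\bar y\,(\bigwedge\Phi\to\psi)$, $\Phi\cup\{\psi\}$ finite sets of atomic formulas; a homomorphism $f:A\to B$ is geometrically closed if it preserves every quasi-algebraic sentence with parameters from $A$ true in $A$; $T$ is geometrically complete if every model $A$ of $T$ is geometrically closed in $\mathrm{Mod}(T)$, i.e. every homomorphism from $A$ to a model of $T$ is geometrically closed. $T_\forall$ is the set of consequences of $T$ of the form $\forall\bar y(\bigwedge\Phi\to\bigvee\Psi)$, $\Phi,\Psi$ finite sets of atomic formulas. For a structure $C$, an $a$-type is a set of atomic $\mathscr L(C)$-sentences; it is closed if it contains all atomic $\mathscr L(C)$-sentences implied by $D^+C\cup\pi$; $C/\pi$ is the quotient by $c\sim c'$ iff $c=c'$ is so implied, relations holding exactly when implied; a closed $\pi$ is $T$-prime if $C/\pi\models T_\forall$, and $\sqrt[T]{\pi}^{+}$ is the intersection of all $T$-prime $a$-types containing $\pi$. $A[\bar x]$ is the $\mathscr L(A)$-structure freely generated over $A$ by $\bar x$ (quotient by $D^+A$ of the term algebra of $\mathscr L\sqcup A\sqcup\bar x$),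 so a finite $a$-type of $A[\bar x]$ is a finite set of atomic $\mathscr L(A)$-formulas in $\bar x$; $\pi(A)=\{\bar a\in A^{|\bar x|}:A\models\bigwedge\pi(\bar a)\}$; $tp_a^A(S)$ is the set of atomic $\mathscr L(A)$-formulas in $\bar x$ true in $A$ of every tuple of $S$. *)

(* Defs.v *)
From mathcomp Require Import all_boot.
Set Implicit Arguments. Unset Strict Implicit. Unset Printing Implicit Defensive.

Record language := Language {
  fsym : Type;                 (* function symbols (constants = arity 0) *)
  farity : fsym -> nat;
  rsym : Type;
  rarity : rsym -> nat }.

Section Syntax.
Variable L : language.

Inductive term : Type :=
  | TVar : nat -> term
  | TApp : forall f : fsym L, ('I_(farity f) -> term) -> term.

Inductive formula : Type :=
  | FTrue : formula
  | FFalse : formula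
  | FEq : term -> term -> formula
  | FRel : forall r : rsym L, ('I_(rarity r) -> term) -> formula
  | FNot : formula -> formula
  | FAnd : formula -> formula -> formula
  | FOr : formula -> formula -> formula
  | FImp : formula -> formula -> formula
  | FForall : nat -> formula -> formula
  | FExists : nat -> formula -> formula.

Definition atomic (phi : formula) : Prop :=
  match phi with FEq _ _ | FRel _ _ => True | _ => False end.

Inductive pos_qf : formula -> Prop :=
  | pqf_atomic phi : atomic phi -> pos_qf phi
  | pqf_true : pos_qf FTrue
  | pqf_false : pos_qf FFalse
  | pqf_and phi psi : pos_qf phi -> pos_qf psi -> pos_qf (FAnd phi psi)
  | pqf_or phi psi : pos_qf phi -> pos_qf psi -> pos_qf (FOr phi psi).

Inductive pos_ex : formula -> Prop :=
  | pex_qf phi : pos_qf phi -> pos_ex phi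
  | pex_ex x phi : pos_ex phi -> pos_ex (FExists x phi).

Definition bigAnd (Phi : seq formula) : formula := foldr FAnd FTrue Phi.
Definition foralls (ys : seq nat) (phi : formula) : formula := foldr FForall phi ys.

Definition quasi_algebraic (phi : formula) : Prop :=
  exists (ys : seq nat) (Phi : seq formula) (psi : formula),
    [/\ foldr (fun chi P => atomic chi /\ P) True Phi, atomic psi &
        phi = foralls ys (FImp (bigAnd Phi) psi)].

End Syntax.

Record structure (L : language) := Structure {
  dom :> Type;
  interp_f : forall f : fsym L, ('I_(farity f) -> dom) -> dom;
  interp_r : forall r : rsym L, ('I_(rarity r) -> dom) -> Prop }.

Section Semantics.
Variables (L : language) (A : structure L).

Fixpoint eval (v : nat -> A) (t : term L) : A :=
  match t with
  | TVar n => v n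
  | TApp f args => @interp_f L A f (fun i => eval v (args i))
  end.

Definition upd (v : nat -> A) (x : nat) (a : A) : nat -> A :=
  fun n => if n == x then a else v n.

Fixpoint sat (v : nat -> A) (phi : formula L) : Prop :=
  match phi with
  | FTrue => True
  | FFalse => False
  | FEq t s => eval v t = eval v s
  | FRel r args => @interp_r L A r (fun i => eval v (args i))
  | FNot p => ~ sat v p
  | FAnd p q => sat v p /\ sat v q
  | FOr p q => sat v p \/ sat v q
  | FImp p q => sat v p -> sat v q
  | FForall x p => forall a : A, sat (upd v x a) p
  | FExists x p => exists a : A, sat (upd v x a) p
  end.

End Semantics.

(* A theory is a set of first-order formulas (sentences); a model is a nonempty
   structure satisfying each of them (under every assignment, i.e. its universal closure). *)
Definition theory (L : language) := formula L -> Prop.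

Definition is_model (L : language) (T : theory L) (A : structure L) : Prop :=
  inhabited A /\ forall phi, T phi -> forall v : nat -> A, sat v phi.

(* Sentences with parameters from A are represented as formulas together with
   an assignment v of the free variables into A; their image under f : A -> B
   is the same formula with assignment f \o v. *)

Definition homomorphism (L : language) (A B : structure L) (f : A -> B) : Prop :=
  forall (phi : formula L) (v : nat -> A), atomic phi -> sat v phi -> sat (f \o v) phi.

Definition immersion (L : language) (A B : structure L) (f : A -> B) : Prop :=
  homomorphism f /\
  forall (phi : formula L) (v : nat -> A), pos_ex phi -> sat (f \o v) phi -> sat v phi.

Definition positively_model_complete (L : language) (T : theory L) : Prop :=
  forall (A B : structure L) (f : A -> B),
    is_model T A -> is_model T B -> homomorphism f -> immersion f.

Definition geometrically_closed (L : language) (A B : structure L) (f : A -> B) : Prop :=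
  homomorphism f /\
  forall (phi : formula L) (v : nat -> A), quasi_algebraic phi -> sat v phi -> sat (f \o v) phi.

Definition geometrically_closed_in_Mod (L : language) (T : theory L) (A : structure L) : Prop :=
  forall (B : structure L) (f : A -> B), is_model T B -> homomorphism f -> geometrically_closed f.

Definition geometrically_complete (L : language) (T : theory L) : Prop :=
  forall A : structure L, is_model T A -> geometrically_closed_in_Mod T A.

(* Main.v *)
Require Import Defs.
From mathcomp Require Import all_boot.
From mathcomp Require Import boolp classical_sets filter.
From Stdlib Require List.
Set Implicit Arguments. Unset Strict Implicit. Unset Printing Implicit Defensive.

Section Syn.
Variable L : language.

Fixpoint tvars (t : term L) : seq nat :=
  match t with
  | TVar n => [:: n]
  | TApp f args => flatten [seq tvars (args i) | i <- enum 'I_(farity f)]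
  end.

Fixpoint trename (s : nat -> nat) (t : term L) : term L :=
  match t with
  | TVar n => TVar L (s n)
  | TApp f args => TApp (fun i => trename s (args i))
  end.

Lemma in_flat_enum n (F : 'I_n -> seq nat) m (i : 'I_n) :
  m \in F i -> m \in flatten [seq F j | j <- enum 'I_n].
Proof.
move=> H; apply/flattenP; exists (F i) => //; apply/mapP; exists i => //.
by rewrite mem_enum.
Qed.

Lemma eval_ext (A : structure L) (u u' : nat -> A) t :
  (forall n, n \in tvars t -> u n = u' n) -> eval u t = eval u' t.
Proof.
elim: t => [n|f args IH] H /=; first by apply: H; rewrite inE.
congr interp_f; apply: funext => i; apply: IH => n Hn; apply: H.
exact: (in_flat_enum (F := fun j => tvars (args j))) Hn.
Qed.

Lemma eval_rename (A : structure L) (u : nat -> A) s t :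
  eval u (trename s t) = eval (u \o s) t.
Proof.
elim: t => [n|f args IH] //=; congr interp_f; apply: funext => i; exact: IH.
Qed.

Definition avars (phi : formula L) : seq nat :=
  match phi with
  | FEq t s => tvars t ++ tvars s
  | FRel r args => flatten [seq tvars (args i) | i <- enum 'I_(rarity r)]
  | _ => [::]
  end.

Definition frename (s : nat -> nat) (phi : formula L) : formula L :=
  match phi with
  | FEq t t' => FEq (trename s t) (trename s t')
  | FRel r args => FRel (fun i => trename s (args i))
  | _ => phi
  end.

Lemma frename_atomic s phi : atomic phi -> atomic (frename s phi).
Proof. by case: phi. Qed.

Lemma sat_rename (A : structure L) (u : nat -> A) s phi : atomic phi ->
  sat u (frename s phi) <-> sat (u \o s) phi.
Proof.
case: phi => //= [t t'|r args] _; first by rewrite !eval_rename.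
have -> : (fun i => eval u (trename s (args i))) = (fun i => eval (u \o s) (args i)).
  by apply: funext => i; rewrite eval_rename.
by [].
Qed.

Lemma sat_ext_atomic (A : structure L) (u u' : nat -> A) phi : atomic phi ->
  (forall n, n \in avars phi -> u n = u' n) -> (sat u phi <-> sat u' phi).
Proof.
case: phi => //= [t t'|r args] _ H.
  rewrite (@eval_ext _ u u' t) ?(@eval_ext _ u u' t') // => n Hn; apply: H;
  by rewrite mem_cat Hn ?orbT.
have -> : (fun i => eval u (args i)) = (fun i => eval u' (args i)) => //.
apply: funext => i; apply: eval_ext => n Hn; apply: H.
exact: (in_flat_enum (F := fun j => tvars (args j))) Hn.
Qed.

Lemma sat_foralls (A : structure L) (u : nat -> A) ys phi :
  sat u (foralls ys phi) <->
  forall w, (forall m, m \notin ys -> w m = u m) -> sat w phi.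
Proof.
elim: ys u => [|y ys IH] u /=.
  split; last by apply; move=> m.
  by move=> H w Hw; have -> : w = u by apply: funext => m; exact: Hw.
split.
  move=> H w Hw; have /IH := H (w y); apply => m Hm.
  rewrite /upd; case: eqP => [->//|/eqP ne]; apply: Hw.
  by rewrite inE negb_or ne.
move=> H a; apply/IH => w Hw; apply: H => m; rewrite inE negb_or => /andP[ne nm].
by rewrite Hw // /upd (negbTE ne).
Qed.

Lemma sat_exists (A : structure L) (u : nat -> A) xs phi :
  sat u (foldr (@FExists L) phi xs) <->
  exists w, (forall m, m \notin xs -> w m = u m) /\ sat w phi.
Proof.
elim: xs u => [|y ys IH] u /=.
  split; first by move=> H; exists u.
  by move=> [w [Hw H]]; have <- : w = u by apply: funext => m; exact: Hw.
split.
  move=> [a /IH [w [Hw H]]]; exists w; split => // m.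
  rewrite inE negb_or => /andP[ne nm]; by rewrite Hw // /upd (negbTE ne).
move=> [w [Hw H]]; exists (w y); apply/IH; exists w; split => // m Hm.
rewrite /upd; case: eqP => [->//|/eqP ne]; apply: Hw.
by rewrite inE negb_or ne.
Qed.

Lemma sat_bigAnd (A : structure L) (u : nat -> A) Phi :
  sat u (bigAnd Phi) <-> forall phi, List.In phi Phi -> sat u phi.
Proof.
elim: Phi => [|p Phi IH] /=; first by split.
rewrite IH; split; first by move=> [Hp H] phi [<-|]; auto.
by move=> H; split; auto.
Qed.

Lemma pos_qf_bigAnd (l : seq (formula L)) :
  (forall phi, List.In phi l -> atomic phi) -> pos_qf (bigAnd l).
Proof.
elim: l => [|p l IH] H /=; first exact: pqf_true.
by apply: pqf_and; [apply: pqf_atomic; apply: H; left|apply: IH => q Hq; apply: H; right].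
Qed.

Lemma pos_ex_exists phi xs : pos_qf phi -> pos_ex (foldr (@FExists L) phi xs).
Proof. by move=> H; elim: xs => [|x xs IH] /=; [apply: pex_qf|apply: pex_ex]. Qed.

End Syn.

Record ultra (Idx : Type) (U : (Idx -> Prop) -> Prop) : Prop := {
  uT : U (fun _ => True);
  uI : forall P Q, U P -> U Q -> U (fun i => P i /\ Q i);
  uS : forall {P Q : Idx -> Prop}, U P -> (forall i, P i -> Q i) -> U Q;
  uN : ~ U (fun _ => False);
  uC : forall P, U P \/ U (fun i => ~ P i) }.

Section Ultra.
Variables (Idx : Type) (U : (Idx -> Prop) -> Prop) (Uu : ultra U).

Lemma uD P : U P -> U (fun i => ~ P i) -> False.
Proof. move=> H1 H2; apply: (uN Uu); apply: (uS Uu (uI Uu H1 H2)) => i [Hp Hn]; exact: Hn Hp. Qed.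

Lemma uNot P : ~ U P <-> U (fun i => ~ P i).
Proof.
split; first by case: (uC Uu P).
by move=> H1 H2; exact: uD H2 H1.
Qed.

Lemma uiff E P Q : U E -> (forall i, E i -> (P i <-> Q i)) -> (U P <-> U Q).
Proof.
move=> UE H; split=> UP; apply: (uS Uu (uI Uu UE UP)) => i [Ei]; by move/(H i Ei).
Qed.

Lemma ufin (X : eqType) (s : seq X) (P : X -> Idx -> Prop) :
  (forall x, U (P x)) -> U (fun i => forall x, x \in s -> P x i).
Proof.
move=> H; elim: s => [|x s IH]; first by apply: (uS Uu (uT Uu)) => i _ x.
apply: (uS Uu (uI Uu (H x) IH)) => i [Hx Hs] y; rewrite inE => /orP[/eqP->//|]; exact: Hs.
Qed.

Lemma ufinord n (P : 'I_n -> Idx -> Prop) :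
  (forall x, U (P x)) -> U (fun i => forall x, P x i).
Proof.
move=> H; apply: (uS Uu (ufin (enum 'I_n) H)) => i Hi x; apply: Hi; by rewrite mem_enum.
Qed.

Variables (L : language) (A : structure L) (a0 : A).

Definition urel (r r' : Idx -> A) := U (fun i => r i = r' i).
Definition UD := {P : (Idx -> A) -> Prop | exists r, P = urel r}.
Definition cls (r : Idx -> A) : UD := exist _ (urel r) (ex_intro _ r erefl).

Lemma sig_eq (P Q : UD) : sval P = sval Q -> P = Q.
Proof.
case: P Q => [P p] [Q q] /= e; subst Q; congr exist; exact: Prop_irrelevance.
Qed.

Lemma urel_sym r r' : urel r r' -> urel r' r.
Proof. by move=> H; apply: (uS Uu H) => i ->. Qed.
Lemma urel_trans r r' r'' : urel r r' -> urel r' r'' -> urel r r''.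
Proof. move=> H1 H2; by apply: (uS Uu (uI Uu H1 H2)) => i [-> ->]. Qed.

Lemma cls_eq r r' : cls r = cls r' <-> urel r r'.
Proof.
split.
  move=> /(congr1 sval) /= e; rewrite e; by apply: (uS Uu (uT Uu)) => i.
move=> H; apply: sig_eq => /=; apply: funext => r''; apply: propext; split => H'.
  exact: urel_trans (urel_sym H) H'.
exact: urel_trans H H'.
Qed.

Definition urepr (d : UD) : Idx -> A :=
  sval (cid (svalP d)).

Lemma cls_repr d : cls (urepr d) = d.
Proof.
rewrite /urepr; case: (cid _) => r /= Hr.
by apply: sig_eq => /=; rewrite Hr.
Qed.

Lemma repr_cls r : urel (urepr (cls r)) r.
Proof. by apply/cls_eq; rewrite cls_repr. Qed.

Definition UP : structure L :=
  @Structure L UD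
    (fun f args => cls (fun i => interp_f (fun j => urepr (args j) i)))
    (fun r args => U (fun i => interp_r (fun j => urepr (args j) i))).

Lemma los_eval (r : nat -> Idx -> A) t :
  eval (A := UP) (fun n => cls (r n)) t = cls (fun i => eval (fun n => r n i) t).
Proof.
elim: t => [n|f args IH] //=.
apply/cls_eq.
apply: (uS Uu (ufinord (fun j => repr_cls (fun i => eval (fun n => r n i) (args j))))) => i H.
congr interp_f; apply: funext => j; rewrite IH; exact: H.
Qed.

Lemma upd_cls (r : nat -> Idx -> A) x d :
  upd (A := UP) (fun n => cls (r n)) x d =
  (fun n => cls (fun i => upd (fun n => r n i) x (urepr d i) n)).
Proof.
apply: funext => n; rewrite /upd; case: (n == x) => //.
by rewrite -{1}(cls_repr d).
Qed.

Lemma los phi : forall r : nat -> Idx -> A,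
  sat (A := UP) (fun n => cls (r n)) phi <-> U (fun i => sat (fun n => r n i) phi).
Proof.
elim: phi => [||t s|rr args|p IH|p IHp q IHq|p IHp q IHq|p IHp q IHq|x p IH|x p IH] r /=.
- split=> // _; exact: uT Uu.
- split=> //; exact: uN Uu.
- rewrite !los_eval cls_eq //.
- apply: (uiff (ufinord (fun j => repr_cls (fun i => eval (fun n => r n i) (args j))))) => i H.
  have -> // : (fun j => urepr (eval (A:=UP) (fun n => cls (r n)) (args j)) i) =
     (fun j => eval (fun n => r n i) (args j)).
  by apply: funext => j; rewrite los_eval; exact: H.
- by rewrite IH uNot.
- rewrite IHp IHq; split; first by case=> H1 H2; exact: uI.
  by move=> H; split; apply: (uS Uu H) => i [].
- rewrite IHp IHq; split.
    by case=> H; apply: (uS Uu H) => i; auto.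
  move=> H; case: (uC Uu (fun i => sat (fun n => r n i) p)) => Hp; first by left.
  right; by apply: (uS Uu (uI Uu H Hp)) => i [[]].
- rewrite IHp IHq; split.
    move=> H; case: (uC Uu (fun i => sat (fun n => r n i) p)) => Hp.
      by apply: (uS Uu (H Hp)) => i.
    by apply: (uS Uu Hp) => i Hi Hi'.
  move=> H Hp; by apply: (uS Uu (uI Uu H Hp)) => i [].
- split.
    move=> H; apply: contrapT => /uNot HN.
    have ch : forall i, exists a, ~ (forall a, sat (upd (fun n => r n i) x a) p) ->
                                 ~ sat (upd (fun n => r n i) x a) p.
      move=> i; case: (pselect (forall a, sat (upd (fun n => r n i) x a) p)) => Hi.
        by exists a0.
      have [a Ha] : exists a, ~ sat (upd (fun n => r n i) x a) p.
        by apply: contrapT => Hn; apply: Hi => a; apply: contrapT => Ha; apply: Hn; exists a.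
      by exists a.
    pose c := fun i => sval (cid (ch i)).
    have Hc : forall i, ~ (forall a, sat (upd (fun n => r n i) x a) p) ->
                       ~ sat (upd (fun n => r n i) x (c i)) p.
      by move=> i; rewrite /c; case: (cid _).
    have := H (cls c); rewrite upd_cls IH => H1.
    apply: (uN Uu); apply: (uS Uu (uI Uu (uI Uu H1 HN) (repr_cls c))) => i [[H2 H3] H4].
    by apply: (Hc i H3); rewrite -H4.
  move=> H d; rewrite upd_cls IH; by apply: (uS Uu H) => i.
- split.
    move=> [d]; rewrite upd_cls IH => H; apply: (uS Uu H) => i Hi; by exists (urepr d i).
  move=> H.
  have ch : forall i, exists a, (exists a, sat (upd (fun n => r n i) x a) p) ->
                              sat (upd (fun n => r n i) x a) p.
    move=> i; case: (pselect (exists a, sat (upd (fun n => r n i) x a) p)) => [[a Ha]|Hi].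
      by exists a.
    by exists a0.
  pose c := fun i => sval (cid (ch i)).
  have Hc : forall i, (exists a, sat (upd (fun n => r n i) x a) p) ->
                      sat (upd (fun n => r n i) x (c i)) p.
    by move=> i; rewrite /c; case: (cid _).
  exists (cls c); rewrite upd_cls IH.
  apply: (uS Uu (uI Uu H (repr_cls c))) => i [H1 H2]; rewrite H2; exact: Hc.
Qed.

Lemma UP_model (T : theory L) : is_model T A -> is_model T UP.
Proof.
move=> [_ HA]; split; first by constructor; exact: (cls (fun _ => a0)).
move=> phi Tphi V.
have -> : V = (fun n => cls (urepr (V n))) by apply: funext => n; rewrite cls_repr.
apply/los; apply: (uS Uu (uT Uu)) => i _; exact: HA.
Qed.

End Ultra.

Lemma ultra_exists (Idx : Type) (U0 : (Idx -> Prop) -> Prop) :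
  U0 (fun _ => True) ->
  (forall P Q, U0 P -> U0 Q -> U0 (fun i => P i /\ Q i)) ->
  (forall P Q : Idx -> Prop, (forall i, P i -> Q i) -> U0 P -> U0 Q) ->
  ~ U0 (fun _ => False) ->
  exists U, ultra U /\ (forall P, U0 P -> U P).
Proof.
move=> HT HI HS HN.
have PF : ProperFilter U0.
  constructor; first exact: HN.
  constructor; first exact: HT.
    move=> P Q; exact: HI.
  move=> P Q; exact: HS.
have [G [GU sub]] := ultraFilterLemma PF.
exists G; split; last exact: sub.
constructor.
- exact: (@filterT _ G).
- move=> P Q; exact: (@filterI _ G).
- move=> P Q HP Hs; exact: (@filterS _ G _ P Q Hs HP).
- exact: (filter_not_empty G).
- move=> P; exact: (in_ultra_setVsetC P GU).
Qed.

Definition idx (B : Type) (cs : seq B) (c : B) : nat := find (fun d => `[< d = c >]) cs.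

Lemma nth_idx (B : Type) (b0 : B) cs c : List.In c cs -> nth b0 cs (idx cs c) = c.
Proof.
rewrite /idx; elim: cs => //= d cs IH [->|H]; first by rewrite asboolT.
case: asboolP => [->//|_]; exact: IH.
Qed.

Lemma In_map_mem (B : Type) (s : seq nat) (g : nat -> B) n :
  n \in s -> List.In (g n) (map g s).
Proof.
elim: s => //= m s IH; rewrite inE => /orP[/eqP->|H]; [left|right] => //; exact: IH.
Qed.

Lemma In_flatten (B : Type) (c : B) s ss :
  List.In c s -> List.In s ss -> List.In c (flatten ss).
Proof.
move=> Hc; elim: ss => //= t ss IH [->|H]; apply: List.in_or_app; [left|right] => //.
exact: IH.
Qed.

Lemma In_mem (s : seq nat) n : List.In n s -> n \in s.
Proof. elim: s => //= m s IH [->|H]; rewrite inE ?eqxx //; by rewrite IH ?orbT. Qed.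

Lemma half_odd j : (j.*2.+1)./2 = j.
Proof. by rewrite -[j.*2.+1]/(true + j.*2) half_bit_double. Qed.

Section Main.
Variables (L : language) (T : theory L) (pmc : positively_model_complete T).
Variables (A B : structure L) (HA : is_model T A) (HB : is_model T B) (f : A -> B)
  (hf : homomorphism f) (a0 : A).
Variables (ys : seq nat) (Phi : seq (formula L)) (psi : formula L)
  (HPhi_at : forall phi, List.In phi Phi -> atomic phi) (Hpsi : atomic psi)
  (v : nat -> A) (Hv : sat v (foralls ys (FImp (bigAnd Phi) psi)))
  (w : nat -> B) (Hw : forall m, m \notin ys -> w m = f (v m))
  (HwPhi : sat w (bigAnd Phi)).

Definition fact := {x : formula L * (nat -> B) | atomic x.1 /\ sat x.2 x.1}.

Lemma realize (i : seq fact) : exists h : B -> A,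
  (forall x, List.In x i -> sat (h \o (sval x).2) (sval x).1) /\ sat (h \o w) psi.
Proof.
pose facts := map sval i.
have Hfacts : forall x, List.In x facts -> atomic x.1 /\ sat x.2 x.1.
  by move=> x /List.in_map_iff [y [<- _]]; exact: (svalP y).
pose cs := flatten [seq map x.2 (avars x.1) | x <- facts] ++ map w (avars psi).
pose id := idx cs.
pose b0 := f a0.
pose sg := fun (x : formula L * (nat -> B)) (n : nat) => (id (x.2 n)).*2.+1.
pose Th := FAnd (bigAnd (map (frename double) Phi))
   (FAnd (bigAnd [seq FEq (TVar L n.*2) (TVar L (id (w n)).*2.+1) | n <- avars psi])
         (bigAnd [seq frename (sg x) x.1 | x <- facts])).
pose xs := map double ys ++ map (fun j => j.*2.+1) (iota 0 (size cs)).
pose VA := fun n : nat => if odd n then a0 else v n./2.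
pose WB := fun n : nat => if odd n then nth b0 cs n./2 else w n./2.
have WBd : forall n, WB n.*2 = w n by move=> n; rewrite /WB odd_double half_double.
have WBo : forall j, WB j.*2.+1 = nth b0 cs j.
  by move=> j; rewrite /WB /= odd_double uphalf_double.
have inpsi : forall n, n \in avars psi -> List.In (w n) cs.
  move=> n Hn; apply: List.in_or_app; right; exact: In_map_mem.
have infact : forall x n, List.In x facts -> n \in avars x.1 -> List.In (x.2 n) cs.
  move=> x n Hx Hn; apply: List.in_or_app; left.
  apply: (In_flatten (s := map x.2 (avars x.1))); first exact: In_map_mem.
  exact: (List.in_map (fun x : formula L * (nat -> B) => map x.2 (avars x.1))).
have posTh : pos_ex (foldr (@FExists L) Th xs).
  apply: pos_ex_exists; apply: pqf_and; last apply: pqf_and.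
  - apply: pos_qf_bigAnd => phi /List.in_map_iff [p [<- Hp]].
    exact: frename_atomic (HPhi_at Hp).
  - by apply: pos_qf_bigAnd => phi /List.in_map_iff [p [<- Hp]].
  - apply: pos_qf_bigAnd => phi /List.in_map_iff [p [<- Hp]].
    exact: frename_atomic (Hfacts _ Hp).1.
have claimB : sat (f \o VA) (foldr (@FExists L) Th xs).
  apply/sat_exists; exists WB; split.
    move=> m Hm; rewrite /WB /VA /=; case: (boolP (odd m)) => om.
      rewrite nth_default // leqNgt; apply/negP => lt; apply: (negP Hm).
      rewrite mem_cat; apply/orP; right; apply/mapP; exists m./2.
        by rewrite mem_iota add0n.
      by rewrite -{1}(odd_double_half m) om.
    have e : (m./2).*2 = m by rewrite -{2}(odd_double_half m) (negbTE om).
    apply: Hw; apply/negP => Hy; apply: (negP Hm); rewrite mem_cat -e map_f //.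
  rewrite /=; split; [|split].
  - apply/sat_bigAnd => phi /List.in_map_iff [p [<- Hp]].
    apply/(sat_rename _ _ (HPhi_at Hp)).
    have -> : WB \o double = w by apply: funext => n; exact: WBd.
    exact: (proj1 (sat_bigAnd _ _) HwPhi _ Hp).
  - apply/sat_bigAnd => phi /List.in_map_iff [n [<- Hn]] /=.
    by rewrite WBd WBo nth_idx //; apply: inpsi; exact: In_mem.
  - apply/sat_bigAnd => phi /List.in_map_iff [x [<- Hx]].
    have [Hat Hs] := Hfacts x Hx.
    apply/(sat_rename _ _ Hat).
    have Hag : forall n, n \in avars x.1 -> (WB \o sg x) n = x.2 n.
      by move=> n Hn; rewrite /= WBo nth_idx //; apply: infact.
    exact: (proj2 (sat_ext_atomic Hat Hag) Hs).
have [_ refl] := pmc HA HB hf.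
have /sat_exists [WA [HWA HTh]] := refl _ VA posTh claimB.
exists (fun c => WA (id c).*2.+1).
move: HTh => /= [H1 [H2 H3]].
pose z := WA \o double.
have Hz : forall n, n \notin ys -> z n = v n.
  move=> n Hn; rewrite /z /= HWA; first by rewrite /VA odd_double half_double.
  rewrite mem_cat negb_or (mem_map double_inj) Hn /=.
  apply/mapP => -[j _ e]; have := congr1 odd e; by rewrite /= !odd_double.
have HzPhi : sat z (bigAnd Phi).
  apply/sat_bigAnd => phi Hin.
  have := proj1 (sat_bigAnd _ _) H1 (frename double phi) (List.in_map _ _ _ Hin).
  by move/(sat_rename _ _ (HPhi_at Hin)).
have Hzpsi : sat z psi by exact: (proj1 (sat_foralls _ _ _) Hv z Hz HzPhi).
split.
  move=> x Hx.
  have Hx' : List.In (sval x) facts by exact: List.in_map.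
  have := proj1 (sat_bigAnd _ _) H3 (frename (sg (sval x)) (sval x).1)
    (List.in_map (fun x => frename (sg x) x.1) _ _ Hx').
  by move/(sat_rename _ _ (Hfacts _ Hx').1).
have Hag : forall n, n \in avars psi -> z n = WA (id (w n)).*2.+1.
  move=> n Hn.
  have Hin : List.In n (avars psi).
    move: Hn; elim: (avars psi) => //= m s IH; rewrite inE => /orP[/eqP->|H]; auto.
  exact: (proj1 (sat_bigAnd _ _) H2 _
    (List.in_map (fun n => FEq (TVar L n.*2) (TVar L (id (w n)).*2.+1)) _ _ Hin)).
exact: (proj1 (sat_ext_atomic Hpsi Hag) Hzpsi).
Qed.

End Main.

Theorem theorem4p6 (L : language) (T : theory L) :
  positively_model_complete T -> geometrically_complete T.
Proof.
move=> pmc A HA B f HB hf; split => // phi v [ys [Phi [psi [HPhi Hpsi ->]]]] Hv.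
have HPhi_at : forall phi, List.In phi Phi -> atomic phi.
  clear -HPhi; move: HPhi; elim: Phi => //= p Phi IH [Hp HP] phi [<-|H] //; exact: IH.
have [a0] := HA.1.
apply/sat_foralls => w Hw HwPhi.
pose Idx := seq (fact B).
pose U0 := fun S : Idx -> Prop =>
  exists l : Idx, forall i : Idx, (forall x, List.In x l -> List.In x i) -> S i.
have [U [Uu sub]] : exists U, ultra U /\ (forall P, U0 P -> U P).
  apply: ultra_exists.
  - by exists [::].
  - move=> P Q [l1 H1] [l2 H2]; exists (l1 ++ l2) => i Hi; split.
      by apply: H1 => x Hx; apply: Hi; apply: List.in_or_app; left.
    by apply: H2 => x Hx; apply: Hi; apply: List.in_or_app; right.
  - by move=> P Q HPQ [l H]; exists l => i Hi; apply: HPQ; apply: H.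
  - by move=> [l H]; apply: (H l).
have Hw' : forall m, m \notin ys -> w m = f (v m) by move=> m /Hw.
pose h := fun i : Idx => sval (cid (realize pmc HA HB hf a0 HPhi_at Hpsi Hv Hw' HwPhi i)).
have Hh : forall i : Idx, (forall x, List.In x i -> sat (h i \o (sval x).2) (sval x).1)
                          /\ sat (h i \o w) psi.
  by move=> i; rewrite /h; case: (cid _).
pose g := fun c : B => cls U (fun i => h i c) : UP U A.
have hg : homomorphism g.
  move=> chi u Hat Hs.
  change (sat (A := UP U A) (fun n => cls U (fun i => h i (u n))) chi).
  apply/(los Uu a0).
  pose x := exist (fun x : formula L * (nat -> B) => atomic x.1 /\ sat x.2 x.1)
              (chi, u) (conj Hat Hs) : fact B.
  have : U (fun i : Idx => List.In x i) by apply: sub; exists [:: x] => i; apply; left.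
  move/(uS Uu); apply => i Hi; exact: ((Hh i).1 x Hi).
have [_ refl] := pmc _ _ g HB (UP_model Uu a0 HA) hg.
apply: (refl psi w (pex_qf (pqf_atomic Hpsi))).
change (sat (A := UP U A) (fun n => cls U (fun i => h i (w n))) psi).
apply/(los Uu a0); apply: (uS Uu (uT Uu)) => i _; exact: (Hh i).2.
Qed.
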